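(* For Pólya trees $t$ let $S_t$, $T$ be as in the context. Then \[ \sum_{\substack{t \in \mathcal{P}_{\le n}\\ |t| \ge \log n}} \left(1 - \frac{[z^n]S_t(z)}{[z^n]T(z)}\right) = \mathcal{O}\!\left(\frac{n}{\log n}\right) \quad \text{as } n\to\infty, \] where $\log$ denotes the logarithm to base $1/\sigma$.
   Context: A recursive tree of size $n$ is a rooted non-plane tree with $n$ nodes labeled $1,\dots,n$ with labels increasing along every path from the root; their exponential generating function is $T(z)=\ln\frac{1}{1-z}$, so $[z^n]T(z)=1/n$. A Pólya tree is an unlabeled rooted non-plane tree; $\mathcal{P}_{\le n}$ is the set of Pólya trees with at most $n$ nodes; $\sigma\approx 0.338$ is the radius of convergence of the ordinary generating function of Pólya trees. A fringe subtree is a node together with all its descendants; its shape is the Pólya tree obtained by forgetting labels. For a Pólya tree $t$ with $k$ nodes, $\ell(t)$ is the number of increasing labelings of $t$ by $1,\dots,k$, $w(t)=\ell(t)/k!$ and $P_t(z)=w(t)z^k$. $S_t(z)$ is the exponential generating function of recursive trees having no fringe subtree of shape $t$; it is the solution of $S_t'(z)=\exp(S_t(z))-P_t'(z)$, $S_t(0)=0$, explicitly $S_t(z)=\ln\frac{1}{1-\int_0^z e^{-P_t(v)}\,dv}-P_t(z)$. *)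

(* Defs.v *)
From Stdlib Require Import Reals List Permutation ClassicalEpsilon.
From mathcomp Require Import all_boot.

Set Implicit Arguments.
Unset Strict Implicit.
Unset Printing Implicit Defensive.

(* A rooted tree with an (irrelevant) ordering of children. *)
Inductive ptree : Type := PNode of seq ptree.

Fixpoint nnodes (t : ptree) : nat :=
  let: PNode s := t in (sumn (map nnodes s)).+1.

Inductive iso : ptree -> ptree -> Prop :=
  IsoNode (s1 s2 s2' : seq ptree) :
    Permutation s2 s2' -> Forall2 iso s1 s2' -> iso (PNode s1) (PNode s2).

(* L is a complete system of pairwise non-isomorphic representatives of the
   Polya trees (isomorphism classes) satisfying the iso-invariant property P. *)
Definition rep_system (P : ptree -> Prop) (L : seq ptree) : Prop :=
  (forall t, In t L -> P t) /\
  (forall t, P t -> exists t', In t' L /\ iso t t') /\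
  (forall i j, (i < size L)%nat -> (j < size L)%nat ->
     iso (nth (PNode [::]) L i) (nth (PNode [::]) L j) -> i = j).

(* A recursive tree of size n: nodes 'I_n (label i stands for i+1), root 0,
   every other node i has a parent par i < i (labels increase away from the root). *)
Definition is_rec (n : nat) (par : {ffun 'I_n -> 'I_n}) : bool :=
  (0 < n) && [forall i : 'I_n, (par i < i) || ((val i == 0) && (par i == i))].

(* The shape of the fringe subtree rooted at v (fuel n suffices). *)
Fixpoint build (n : nat) (par : 'I_n -> 'I_n) (fuel : nat) (v : 'I_n) : ptree :=
  if fuel is f.+1 then
    PNode (map (build par f) (filter (fun u => (par u == v) && (u != v)) (enum 'I_n)))
  else PNode [::].

Definition fringe_shape (n : nat) (par : {ffun 'I_n -> 'I_n}) (v : 'I_n) : ptree :=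
  build par n v.

Definition pbool (P : Prop) : bool :=
  if excluded_middle_informative P then true else false.

Definition avoids (n : nat) (t : ptree) (par : {ffun 'I_n -> 'I_n}) : bool :=
  [forall v : 'I_n, ~~ pbool (iso (fringe_shape par v) t)].

Local Open Scope R_scope.

(* [z^n] S_t(z) and [z^n] T(z) as exponential generating function coefficients *)
Definition coefS (t : ptree) (n : nat) : R :=
  INR #|[pred par : {ffun 'I_n -> 'I_n} | is_rec par && avoids t par]| / INR n`!.

Definition coefT (n : nat) : R :=
  INR #|[pred par : {ffun 'I_n -> 'I_n} | is_rec par]| / INR n`!.

Definition polya_count (k m : nat) : Prop :=
  exists L, rep_system (fun t => nnodes t = k) L /\ size L = m.

Definition polya_num (k : nat) : nat := ClassicalEpsilon.epsilon (inhabits 0%nat) (polya_count k).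

Definition polya_ogf_converges (r : R) : Prop :=
  exists l, infinite_sum (fun k => INR (polya_num k) * r ^ k) l.

(* radius of convergence = sup { r >= 0 | sum_k p_k r^k converges } *)
Definition polya_sigma : R :=
  @ClassicalEpsilon.epsilon R (inhabits R0) (is_lub (fun r => 0 <= r /\ polya_ogf_converges r)).

Definition logs (x : R) : R := ln x / ln (1 / polya_sigma).

(* Main.v *)
Require Import Defs.
From Stdlib Require Import Reals List.
Set Warnings "-notation-overridden".
From Stdlib Require Import Permutation Lia Lra ClassicalEpsilon.
From Stdlib Require ZArith.
From mathcomp Require Import all_boot.
From mathcomp Require Import zify.
Set Warnings "-notation-overridden".
Set Implicit Arguments.
Unset Strict Implicit.

Fixpoint ptree_ind' (P : ptree -> Prop) (H : forall s, Forall P s -> P (PNode s)) (t : ptree) : P t :=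
  let: PNode s := t in H s ((fix F (l : seq ptree) : Forall P l :=
     match l with [::] => Forall_nil _ | x :: r => Forall_cons x (ptree_ind' H x) (F r) end) s).

Lemma iso_refl t : iso t t.
Proof.
elim/ptree_ind': t => s IH; apply: (IsoNode (s2' := s)); first by apply: Permutation_refl.
elim: s IH => [|x s IHs] IH; first by constructor.
inversion IH; subst; constructor; auto.
Qed.

Lemma perm_sumn (a b : seq nat) : Permutation a b -> sumn a = sumn b.
Proof. elim => //= [x l l' _ -> //| x y l | l l' l'' _ -> _ -> //]; by rewrite addnCA. Qed.

Lemma isoE s1 s2 : iso (PNode s1) (PNode s2) -> exists s2', Permutation s2 s2' /\ Forall2 iso s1 s2'.
Proof. move=> H; inversion H; subst; eauto. Qed.

Lemma ForallE A (P : A -> Prop) x s : Forall P (x :: s) -> P x /\ Forall P s.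
Proof. by move=> H; inversion H. Qed.

Lemma Forall2E A B (R : A -> B -> Prop) x s c : Forall2 R (x :: s) c ->
  exists y c', c = y :: c' /\ R x y /\ Forall2 R s c'.
Proof. move=> H; inversion H; subst; eauto. Qed.

Lemma Forall2E0 A B (R : A -> B -> Prop) c : Forall2 R [::] c -> c = [::].
Proof. by move=> H; inversion H. Qed.

Lemma iso_nnodes t1 t2 : iso t1 t2 -> nnodes t1 = nnodes t2.
Proof.
elim/ptree_ind': t1 t2 => s1 IH [s2] /isoE [s2' [P F]] /=.
congr S. rewrite (perm_sumn (Permutation_map nnodes P)).
elim: s1 s2' IH F {P} => [|x s IHs] s2' IH F.
  by rewrite (Forall2E0 F).
have [y [c' [-> [R F']]]] := Forall2E F. have [IHx IHs'] := ForallE IH.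
by rewrite /= (IHx _ R) (IHs _ IHs' F').
Qed.

Lemma perm_forall2 A B (R : A -> B -> Prop) (a b : seq A) : Permutation a b ->
  forall c, Forall2 R b c -> exists c', Permutation c' c /\ Forall2 R a c'.
Proof.
elim => [| x l l' _ IH | x y l | l l' l'' _ IH1 _ IH2] c F.
- by exists c; split; [apply: Permutation_refl|].
- have [y [c0 [-> [Rx F0]]]] := Forall2E F.
  have [c' [P F']] := IH _ F0. exists (y :: c'); split; [by apply: perm_skip| by constructor].
- have [y1 [c0 [-> [Ra F0]]]] := Forall2E F. have [y0 [c1 [-> [Rb F1]]]] := Forall2E F0.
  exists (y0 :: y1 :: c1); split; first by apply: perm_swap.
  constructor => //. constructor => //.
- have [c1 [P1 F1]] := IH2 _ F. have [c2 [P2 F2]] := IH1 _ F1.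
  exists c2; split => //. by apply: Permutation_trans P1.
Qed.

Lemma iso_sym t1 t2 : iso t1 t2 -> iso t2 t1.
Proof.
elim/ptree_ind': t1 t2 => s1 IH [s2] /isoE [s2' [P F]].
have F2 : Forall2 iso s2' s1.
  elim: s1 s2' IH F {P} => [|x s IHs] s2' IH F; first by rewrite (Forall2E0 F).
  have [y [c' [-> [R F']]]] := Forall2E F. have [IHx IHs'] := ForallE IH.
  constructor; auto.
have [c [P' F']] := perm_forall2 P F2.
by apply: (IsoNode (s2' := c)); first by apply: Permutation_sym.
Qed.

Lemma iso_trans t1 t2 t3 : iso t1 t2 -> iso t2 t3 -> iso t1 t3.
Proof.
elim/ptree_ind': t1 t2 t3 => s1 IH [s2] [s3] /isoE [s2' [P F]] /isoE [s3' [P' F']].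
have [c [Pc Fc]] := perm_forall2 (Permutation_sym P) F'.
apply: (IsoNode (s2' := c)); first by apply: Permutation_trans P' (Permutation_sym Pc).
elim: s1 s2' c IH F Fc {P Pc} => [|x s IHs] s2' c IH F1 F2.
  by rewrite (Forall2E0 F1) in F2; rewrite (Forall2E0 F2).
have [y [c' [E [R Fx]]]] := Forall2E F1; subst s2'.
have [z [c'' [-> [R' Fy]]]] := Forall2E F2. have [IHx IHs'] := ForallE IH.
constructor; eauto.
Qed.

Local Open Scope nat_scope.

Lemma card_sumb (T : finType) (A : {pred T}) : #|A| = \sum_(x : T) (x \in A).
Proof. rewrite -sum1_card big_mkcond /=; apply: eq_bigr => x _; by case: (x \in A). Qed.

Section Rec.
Variable n : nat.
Variable par : {ffun 'I_n -> 'I_n}.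
Hypothesis rec : is_rec par.

Lemma rec_cond i : (par i < i) || ((val i == 0) && (par i == i)).
Proof. by case/andP: rec => _ /forallP. Qed.

Lemma rec_le i : par i <= i.
Proof. by case/orP: (rec_cond i) => [/ltnW|/andP [_ /eqP ->]]. Qed.

Lemma rec_root i : nat_of_ord i = 0 -> par i = i.
Proof. move=> H; apply: val_inj => /=; have := rec_le i; rewrite H leqn0 => /eqP; by []. Qed.

Lemma rec_lt i : nat_of_ord i != 0 -> par i < i.
Proof. move=> H; case/orP: (rec_cond i) => // /andP [H' _]; by rewrite H' in H. Qed.

Lemma rec_fix i : par i = i -> nat_of_ord i = 0.
Proof. move=> H; case: (eqVneq (val i) 0) => // /rec_lt; by rewrite H ltnn. Qed.

Lemma iter_le k i : iter k par i <= i.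
Proof. elim: k => //= k IH; exact: leq_trans (rec_le _) IH. Qed.

Lemma iter_bound k i : (iter k par i + k <= i) || (nat_of_ord (iter k par i) == 0).
Proof.
elim: k => [|k IH] /=; first by rewrite addn0 leqnn.
case: (eqVneq (nat_of_ord (iter k par i)) 0) => [H|H].
  by rewrite (rec_root H) H eqxx orbT.
have := rec_lt H; rewrite (negbTE H) orbF in IH => Hl. apply/orP; left; idtac.
move: Hl IH; set a := nat_of_ord (par _); set b := nat_of_ord (iter _ _ _); set c := nat_of_ord i; move=> Hl IH; rewrite addnS -addSn; apply: leq_trans IH; by rewrite leq_add2r.
Qed.
Lemma iter_big k (i : 'I_n) : i <= k -> nat_of_ord (iter k par i) = 0.
Proof.
move=> Hk; case/orP: (iter_bound k i) => [H|/eqP //].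
move: H Hk; set a := nat_of_ord (iter _ _ _); set c := nat_of_ord i; lia.
Qed.

Definition dset (b : nat) (v : 'I_n) : {set 'I_n} :=
  [set u | [exists k : 'I_b, iter k par u == v]].

Lemma mem_dset b v u : n <= b -> (u \in dset b v) = pbool (exists k, iter k par u = v).
Proof.
move=> Hb; rewrite /pbool; case: excluded_middle_informative => [[k Hk]|H]; rewrite inE.
  apply/existsP; case: (ltnP k u) => Hku.
    have Hk' : k < b by have := ltn_ord u; lia.
    by exists (Ordinal Hk'); rewrite Hk.
  have Hk' : (u : nat) < b by have := ltn_ord u; lia.
  exists (Ordinal Hk'); apply/eqP/val_inj => /=.
  rewrite iter_big // -Hk iter_big //.
apply/negbTE/negP => /existsP [k /eqP Hk]; apply: H; by exists k.
Qed.

Lemma iterSr' k x : iter k.+1 par x = iter k par (par x).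
Proof. by rewrite iterSr. Qed.

Lemma build_nnodes f v : nnodes (build par f v) = #|dset f.+1 v|.
Proof.
elim: f v => [|f IH] v.
  rewrite /=; symmetry; apply: (@eq_card1 _ v) => u; rewrite /dset inE /=.
  apply/existsP/eqP => [[k /eqP]|->]; first by rewrite (ord1 k).
  by exists ord0.
rewrite /= sumnE big_map big_map big_filter big_enum_cond.
under eq_bigr do rewrite IH.

have Hpt : forall u : 'I_n, (u \in dset f.+2 v) =
   (u == v) || [exists c, (par c == v) && (c != v) && (u \in dset f.+1 c)].
  move=> u; rewrite !inE; apply/existsP/orP.
  - case=> k Hk.
    pose P := fun j => (j < f.+2) && (iter j par u == v).
    have exP : exists j, P j by exists k; rewrite /P ltn_ord Hk.
    case: (ex_minnP exP) => j /andP [Hj Hju] Hmin.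
    case: j Hj Hju Hmin => [|j] Hj Hju Hmin; first by left.
    right; apply/existsP; exists (iter j par u).
    rewrite -iterS Hju /=.
    apply/andP; split.
      apply/negP => /eqP E. have := Hmin j. rewrite /P E eqxx andbT.
      have -> : j < f.+2 by lia. by move=> /(_ isT); rewrite ltnn.
    rewrite inE; apply/existsP; have Hj' : j < f.+1 by lia. by exists (Ordinal Hj').
  - case=> [/eqP ->|/existsP [c /andP [/andP [/eqP Hc _] H3]]].
      by exists ord0.
    move: H3; rewrite inE => /existsP [k /eqP Hk].
    have Hk' : k.+1 < f.+2 by rewrite ltnS ltn_ord.
    by exists (Ordinal Hk'); rewrite /= Hk Hc.
have Hv : forall c, par c = v -> c != v -> v \notin dset f.+1 c.
  move=> c Hc Hcv; rewrite inE; apply/existsP => [[k /eqP Hk]].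
  have Hc0 : nat_of_ord c != 0 by apply/negP => /eqP /rec_root; rewrite Hc => E; by rewrite E eqxx in Hcv.
  have := rec_lt Hc0; rewrite Hc => Hlt.
  have := iter_le k v; rewrite Hk; lia.
have Hdisj : forall u c1 c2, par c1 = v -> c1 != v -> par c2 = v -> c2 != v ->
    u \in dset f.+1 c1 -> u \in dset f.+1 c2 -> c1 = c2.
  move=> u c1 c2 H1 H1v H2 H2v; rewrite !inE => /existsP [k1 /eqP E1] /existsP [k2 /eqP E2].
  wlog Hk : k1 k2 c1 c2 H1 H1v H2 H2v E1 E2 / k1 <= k2.
    move=> W; case: (leqP k1 k2) => H; first exact: (W k1 k2).
    symmetry; apply: (W k2 k1) => //; exact: ltnW.
  have Hd : iter (k2 - k1) par c1 = c2 by rewrite -E2 -E1 -iterD subnK.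
  case E: (k2 - k1) Hd => [|d] Hd; first by [].
  rewrite iterSr' H1 in Hd.
  have Hc0 : nat_of_ord c2 != 0 by apply/negP => /eqP /rec_root; rewrite H2 => E'; by rewrite E' eqxx in H2v.
  have := rec_lt Hc0; rewrite H2 => Hlt. have := iter_le d v; rewrite Hd; lia.
rewrite card_sumb.
transitivity (\sum_(u : 'I_n) ((u == v) + \sum_(c | (par c == v) && (c != v)) (u \in dset f.+1 c)) : nat).
  have E1 : \sum_(i < n) (i == v) = 1 by rewrite (bigD1 v) //= eqxx big1 // => i /negbTE ->.
  rewrite big_split /= E1.
  rewrite add1n; congr S; rewrite exchange_big /=.
  rewrite (eq_bigl (fun c => (par c == v) && (c != v))) //.
  by apply: eq_bigr => c _; rewrite card_sumb.
apply: eq_bigr => u _; rewrite Hpt.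
case: (eqVneq u v) => [->|Huv] /=.
  rewrite big1 // => c /andP [/eqP Hc Hcv]; by rewrite (negbTE (Hv c Hc Hcv)).
case: existsP => [[c /andP [/andP [/eqP Hc Hcv] Hu]]|Hn].
  rewrite (bigD1 c) /=; last by rewrite Hc eqxx Hcv.
  rewrite Hu big1 // => c' /andP [/andP [/eqP Hc' Hc'v] Hne].
  apply/eqP; rewrite eqb0; apply/negP => Hu'.
  by rewrite (Hdisj u c c' Hc Hcv Hc' Hc'v Hu Hu') eqxx in Hne.
rewrite big1 // => c /andP [/eqP Hc Hcv]; apply/eqP; rewrite eqb0; apply/negP => Hu.
apply: Hn; exists c; by rewrite Hc eqxx Hcv.
Qed.

End Rec.

Local Open Scope nat_scope.

Lemma pbool_eq (P Q : Prop) : (P <-> Q) -> pbool P = pbool Q.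
Proof.
move=> H; rewrite /pbool; case: excluded_middle_informative => HP;
case: excluded_middle_informative => HQ //; exfalso; tauto.
Qed.

Definition ext n (par : {ffun 'I_n -> 'I_n}) (p : 'I_n) : {ffun 'I_n.+1 -> 'I_n.+1} :=
  [ffun i => if unlift ord_max i is Some j then lift ord_max (par j) else lift ord_max p].

Definition restr n (par' : {ffun 'I_n.+2 -> 'I_n.+2}) : {ffun 'I_n.+1 -> 'I_n.+1} :=
  [ffun j => odflt j (unlift ord_max (par' (lift ord_max j)))].

Definition lastp n (par' : {ffun 'I_n.+2 -> 'I_n.+2}) : 'I_n.+1 :=
  odflt ord0 (unlift ord_max (par' ord_max)).

Section Ext.
Variable n : nat.
Variable par : {ffun 'I_n -> 'I_n}.
Variable p : 'I_n.

Lemma ext_lift j : ext par p (lift ord_max j) = lift ord_max (par j).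
Proof. by rewrite ffunE liftK. Qed.

Lemma ext_max : ext par p ord_max = lift ord_max p.
Proof. by rewrite ffunE unlift_none. Qed.

Lemma iter_ext_lift k j : iter k (ext par p) (lift ord_max j) = lift ord_max (iter k par j).
Proof. elim: k => //= k ->; exact: ext_lift. Qed.

Lemma iter_ext_max k : iter k.+1 (ext par p) ord_max = lift ord_max (iter k par p).
Proof. by rewrite iterSr ext_max iter_ext_lift. Qed.

Lemma val_lift_max (j : 'I_n) : nat_of_ord (lift ord_max j) = nat_of_ord j.
Proof. by rewrite lift_max. Qed.

Lemma rec_ext : 0 < n -> is_rec (ext par p) = is_rec par.
Proof.
move=> Hn; rewrite /is_rec Hn /=; apply/forallP/forallP => H j.
- have := H (lift ord_max j); rewrite ext_lift !val_lift_max.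
  by rewrite (inj_eq (@lift_inj _ ord_max)).
- case: (unliftP ord_max j) => [i ->|->].
    rewrite ext_lift !val_lift_max (inj_eq (@lift_inj _ ord_max)); exact: H.
  by rewrite ext_max val_lift_max /= ltn_ord.
Qed.

End Ext.

Section Restr.
Variable n : nat.

Lemma restr_ext (par : {ffun 'I_n.+1 -> 'I_n.+1}) p : restr (ext par p) = par.
Proof. apply/ffunP => j; by rewrite ffunE ext_lift liftK. Qed.

Lemma lastp_ext (par : {ffun 'I_n.+1 -> 'I_n.+1}) p : lastp (ext par p) = p.
Proof. by rewrite /lastp ext_max liftK. Qed.

Lemma ext_restr (par' : {ffun 'I_n.+2 -> 'I_n.+2}) : is_rec par' -> ext (restr par') (lastp par') = par'.
Proof.
move=> R; apply/ffunP => i; case: (unliftP ord_max i) => [j ->|->].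
  rewrite ext_lift ffunE. case: (unliftP ord_max (par' (lift ord_max j))) => [y ->|E] //=.
  have := rec_le R (lift ord_max j); rewrite E val_lift_max /= => H.
  have := ltn_ord j; move: H; set a := nat_of_ord j; lia.

rewrite ext_max /lastp. case: (unliftP ord_max (par' ord_max)) => [y ->|E] //=.
have := rec_lt R (i := ord_max) isT. by rewrite E ltnn.
Qed.

Lemma sum_rec_ext (F : {ffun 'I_n.+2 -> 'I_n.+2} -> nat) :
  \sum_(par' | is_rec par') F par' =
  \sum_(par : {ffun 'I_n.+1 -> 'I_n.+1} | is_rec par) \sum_(p : 'I_n.+1) F (ext par p).
Proof.
rewrite pair_big /= (reindex_onto (fun q : {ffun 'I_n.+1 -> 'I_n.+1} * 'I_n.+1 => ext q.1 q.2)
   (fun par' => (restr par', lastp par'))) /=; last exact: ext_restr.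
apply: eq_bigl => [[q1 q2]] /=; by rewrite rec_ext // restr_ext lastp_ext eqxx andbT.
Qed.

End Restr.

Definition sz n (par : {ffun 'I_n -> 'I_n}) (v : 'I_n) : nat := #|dset par n v|.

Lemma widen_lift n (i : 'I_n) : widen_ord (leqnSn n) i = lift ord_max i.
Proof. apply: val_inj; by rewrite /= /bump leqNgt ltn_ord. Qed.

Section SzExt.
Variable n : nat.
Variable par : {ffun 'I_n -> 'I_n}.
Hypothesis rec : is_rec par.
Variable p : 'I_n.

Lemma n_gt0 : 0 < n. Proof. by case/andP: rec. Qed.

Lemma rec' : is_rec (ext par p). Proof. by rewrite rec_ext // n_gt0. Qed.

Lemma mem_ext_lift u v : (lift ord_max u \in dset (ext par p) n.+1 (lift ord_max v)) = (u \in dset par n v).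
Proof.
rewrite (mem_dset rec') // (mem_dset rec) //; apply: pbool_eq; split => [[k Hk]|[k Hk]]; exists k.
  apply: (@lift_inj _ ord_max); by rewrite -(iter_ext_lift par p).
by rewrite (iter_ext_lift par p) Hk.
Qed.

Lemma mem_ext_max v : (ord_max \in dset (ext par p) n.+1 (lift ord_max v)) = (p \in dset par n v).
Proof.
rewrite (mem_dset rec') // (mem_dset rec) //; apply: pbool_eq; split => [[[|k] Hk]|[k Hk]].
- by have := neq_lift ord_max v; rewrite -Hk eqxx.
- exists k; apply: (@lift_inj _ ord_max); by rewrite -(iter_ext_max par p).
- exists k.+1; by rewrite (iter_ext_max par p) Hk.
Qed.

Lemma sz_ext_lift v : sz (ext par p) (lift ord_max v) = sz par v + (p \in dset par n v).
Proof.
rewrite /sz !card_sumb big_ord_recr /=; congr addn; last by rewrite mem_ext_max.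
apply: eq_bigr => u _; by rewrite widen_lift mem_ext_lift.
Qed.

Lemma sz_ext_max : sz (ext par p) ord_max = 1.
Proof.
rewrite /sz card_sumb big_ord_recr /= big1.
  rewrite (mem_dset rec') //; rewrite /pbool; case: excluded_middle_informative => // H.
  by exfalso; apply: H; exists 0.
move=> u _; rewrite widen_lift (mem_dset rec') //; rewrite /pbool; case: excluded_middle_informative => // [[k Hk]].
by have := neq_lift ord_max (iter k par u); rewrite -(iter_ext_lift par p) Hk eqxx.
Qed.

End SzExt.

Lemma sum_ext_g n (par : {ffun 'I_n -> 'I_n}) (rec : is_rec par) (g : nat -> nat) :
  \sum_(p' : 'I_n) \sum_(v' : 'I_n.+1) g (sz (ext par p') v') =
  \sum_(v : 'I_n) ((n - sz par v) * g (sz par v) + sz par v * g (sz par v).+1) + n * g 1.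
Proof.
transitivity (\sum_(p' : 'I_n) (\sum_(v : 'I_n) g (sz par v + (p' \in dset par n v)) + g 1)).
  apply: eq_bigr => p' _; rewrite big_ord_recr /= sz_ext_max //; congr addn.
  apply: eq_bigr => v _; by rewrite widen_lift sz_ext_lift.
rewrite big_split /= sum_nat_const card_ord; congr addn.
rewrite exchange_big; apply: eq_bigr => v _.
rewrite (bigID (fun p' => p' \in dset par n v)) /= addnC.
rewrite (eq_bigr (fun _ => g (sz par v))); last by move=> i /negbTE ->; rewrite addn0.
rewrite [X in _ + X](eq_bigr (fun _ => g (sz par v).+1)); last by move=> i ->; rewrite addn1.
rewrite !sum_nat_const.
have -> : #|(fun i : 'I_n => i \notin dset par n v)| = n - sz par v.
  have E : #|(fun i : 'I_n => i \notin dset par n v)| = #|[predC dset par n v]| by apply: eq_card => i; rewrite !inE.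
  rewrite E /sz; have := cardC (dset par n v); rewrite card_ord; lia.
by [].
Qed.

Definition Mn n := \sum_(par : {ffun 'I_n -> 'I_n} | is_rec par) 1.
Definition T n (g : nat -> nat) :=
  \sum_(par : {ffun 'I_n -> 'I_n} | is_rec par) \sum_(v : 'I_n) g (sz par v).

Lemma T_rec n g : T n.+2 g =
  T n.+1 (fun s => (n.+1 - s) * g s + s * g s.+1) + n.+1 * Mn n.+1 * g 1.
Proof.
rewrite /T sum_rec_ext /Mn big_distrr big_distrl /= -big_split /=.
apply: eq_bigr => par R; by rewrite sum_ext_g // muln1.
Qed.

Lemma M_rec n : Mn n.+2 = n.+1 * Mn n.+1.
Proof.
rewrite /Mn sum_rec_ext big_distrr /=; apply: eq_bigr => par R.
by rewrite sum_nat_const card_ord muln1.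
Qed.

Lemma T_lin n a b f h : T n (fun s => a * f s + b * h s) = a * T n f + b * T n h.
Proof.
rewrite /T !big_distrr -big_split /=; apply: eq_bigr => par _.
by rewrite !big_distrr -big_split.
Qed.

Lemma T_ext n f h : (forall s, f s = h s) -> T n f = T n h.
Proof. move=> H; apply: eq_bigr => par _; apply: eq_bigr => v _; exact: H. Qed.

Definition par1 : {ffun 'I_1 -> 'I_1} := [ffun => ord0].

Lemma rec_par1 (par : {ffun 'I_1 -> 'I_1}) : is_rec par = (par == par1).
Proof.
have -> : par == par1 by apply/eqP/ffunP => i; rewrite ffunE; apply: val_inj; rewrite /= (ord1 (par i)) /=.
by rewrite /is_rec /=; apply/forallP => i; rewrite !ord1 /= eqxx.
Qed.

Lemma sz_le n (par : {ffun 'I_n -> 'I_n}) v : sz par v <= n.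
Proof. have := max_card (mem (dset par n v)); by rewrite card_ord. Qed.

Lemma T1 g : T 1 g = g 1.
Proof.
rewrite /T (big_pred1 par1); last by move=> par; rewrite rec_par1.
rewrite big_ord1; congr g; apply/eqP; rewrite eqn_leq sz_le /sz card_gt0; apply/set0Pn.
by exists ord0; rewrite inE; apply/existsP; exists ord0.
Qed.

Lemma M1 : Mn 1 = 1.
Proof. rewrite /Mn (big_pred1 par1) // => par; by rewrite rec_par1. Qed.

Local Open Scope nat_scope.

Lemma T_ext_le n f h : (forall s, s <= n -> f s = h s) -> T n f = T n h.
Proof. move=> H; apply: eq_bigr => par _; apply: eq_bigr => v _; apply: H; exact: sz_le. Qed.

Lemma T_mono n f h : (forall s, f s <= h s) -> T n f <= T n h.
Proof. move=> H; apply: leq_sum => par _; apply: leq_sum => v _; exact: H. Qed.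

Lemma T_const1 n : T n (fun _ => 1) = n * Mn n.
Proof.
rewrite /T /Mn big_distrr /=; apply: eq_bigr => par _.
by rewrite sum_nat_const card_ord muln1.
Qed.

Definition Y n j := T n (fun s => s == j).
Definition X n K := T n (fun s => K <= s).

Lemma Y_big n j : n < j -> Y n j = 0.
Proof.
move=> H; rewrite /Y (@T_ext_le n _ (fun _ => 0)); last by move=> s Hs; apply/eqP; rewrite eqb0; apply/eqP; lia.
by rewrite /T big1 // => par _; rewrite big1.
Qed.

Lemma X_big n K : n < K -> X n K = 0.
Proof.
move=> H; rewrite /X (@T_ext_le n _ (fun _ => 0)); last by move=> s Hs; apply/eqP; rewrite eqb0 -ltnNge; lia.
by rewrite /T big1 // => par _; rewrite big1.
Qed.

Lemma Y_rec n j : 1 <= j -> Y n.+2 j =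
  (n.+1 - j) * Y n.+1 j + (j - 1) * Y n.+1 (j - 1) + n.+1 * Mn n.+1 * (j == 1).
Proof.
move=> Hj; rewrite /Y T_rec -T_lin; congr addn; last by rewrite (eq_sym 1).
apply: T_ext => s; case: (eqVneq s j) => [->|Hsj]; case: (eqVneq s.+1 j) => H1; case: (eqVneq s (j - 1)) => H2 //=; lia.
Qed.

Lemma X_rec n K : 2 <= K -> X n.+2 K = n.+1 * X n.+1 K + (K - 1) * Y n.+1 (K - 1).
Proof.
move=> HK; rewrite /X /Y T_rec -T_lin.
have -> : (K <= 1) = false by lia.
rewrite muln0 addn0; apply: T_ext_le => s Hs.
case: (leqP K s) => H1; case: (leqP K s.+1) => H2; case: (eqVneq s (K - 1)) => H3 /=; lia.
Qed.

Lemma Y_exact m : (forall j, 1 <= j -> j < m.+1 -> j * j.+1 * Y m.+1 j = m.+1 * Mn m.+1)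
  /\ Y m.+1 m.+1 = Mn m.+1.
Proof.
elim: m => [|m [IH1 IH2]].
  split; first by move=> j H1 H2; lia.
  by rewrite /Y T1 M1.
split; last first.
  rewrite Y_rec // M_rec. have -> : m.+1 - m.+2 = 0 by lia.
  by rewrite mul0n add0n subn1 /= IH2 muln0 addn0.
move=> j H1 H2; rewrite Y_rec // M_rec.
case: (eqVneq j 1) => [->|Hj1].
  rewrite subnn mul0n addn0 muln1 /=.
  case: m IH1 IH2 {H2} => [|m] IH1 IH2.
    by rewrite subn1 /= mul0n add0n mul1n.
  have := IH1 1 isT isT. move: (Y m.+2 1) (Mn m.+2) => y M. nia.
rewrite muln0 addn0.
have Hj' := IH1 (j - 1) ltac:(lia) ltac:(lia).
have Ej : j - 1 = j.-1 by lia.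
move: Hj'; rewrite Ej.
case: (ltnP j m.+1) => H3.
  have := IH1 j H1 H3. move: (Y m.+1 j) (Y m.+1 j.-1) (Mn m.+1) => y y' M.
  case: j H1 H2 Hj1 H3 Ej => [|j] //= H1 H2 Hj1 H3 Ej. nia.
have Ejm : j = m.+1 by lia.
subst j. rewrite IH2 subnn mul0n add0n /=. move: (Y m.+1 m) (Mn m.+1) => y M. nia.
Qed.

Lemma X_bound m K : 1 <= K -> K * X m.+1 K <= m.+1 * Mn m.+1.
Proof.
elim: m K => [|m IH] K HK.
  case: (eqVneq K 1) => [->|HK1]; last by rewrite X_big ?muln0 //; lia.
  by rewrite /X T1 M1.
case: (eqVneq K 1) => [->|HK1].
  rewrite mul1n -T_const1; apply: T_mono => s; by case: (1 <= s).
case: (ltnP m.+2 K) => HK2; first by rewrite X_big ?muln0.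
rewrite X_rec; last by lia.
rewrite M_rec mulnDr.
case: (eqVneq K m.+2) => [->|HK3].
  rewrite X_big // !muln0 add0n subn1 /= (proj2 (Y_exact m)). nia.
have HY := proj1 (Y_exact m) (K - 1) ltac:(lia) ltac:(lia).
have HX := IH K HK.
have EK : K - 1 = K.-1 by lia.
move: HY HX; rewrite EK; case: K HK HK1 HK2 HK3 EK => [|K] //= HK HK1 HK2 HK3 EK.
move: (Y m.+1 K) (X m.+1 K.+1) (Mn m.+1) => y x M. nia.
Qed.

Local Open Scope nat_scope.

Lemma sz_build n (par : {ffun 'I_n -> 'I_n}) v : is_rec par -> nnodes (fringe_shape par v) = sz par v.
Proof.
move=> R; rewrite /fringe_shape (build_nnodes R) /sz; apply: eq_card => u.
by rewrite (mem_dset R) // (mem_dset R).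
Qed.

Lemma inner_bound n (par : {ffun 'I_n.+1 -> 'I_n.+1}) (L : seq ptree) K :
  is_rec par ->
  (forall i j, (i < size L)%nat -> (j < size L)%nat ->
     iso (nth (PNode [::]) L i) (nth (PNode [::]) L j) -> i = j) ->
  \sum_(t <- L) ((K <= nnodes t) && ~~ avoids t par) <= \sum_(v : 'I_n.+1) (K <= sz par v).
Proof.
move=> R HL.
rewrite (big_nth (PNode [::])) big_mkord.
rewrite -(card_sumb [pred v : 'I_n.+1 | K <= sz par v]).
set F := fun i : 'I_(size L) => (K <= nnodes (nth (PNode [::]) L i)) && ~~ avoids (nth (PNode [::]) L i) par.
rewrite (eq_bigr (fun i => nat_of_bool (F i))) // -(card_sumb [pred i | F i]).
pose f := fun i : 'I_(size L) => odflt ord0 [pick v | pbool (iso (fringe_shape par v) (nth (PNode [::]) L i))].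
have Hf : forall i, F i -> iso (fringe_shape par (f i)) (nth (PNode [::]) L i).
  move=> i /andP [_]; rewrite /avoids negb_forall => /existsP [v]; rewrite negbK => Hv.
  rewrite /f; case: pickP => [w Hw|H]; last by rewrite H in Hv.
  move: Hw; rewrite /pbool; by case: excluded_middle_informative.
rewrite -(@card_in_imset _ _ f).
  apply: subset_leq_card; apply/subsetP => v /imsetP [i Hi ->]; rewrite inE.
  have := Hf i Hi; move/iso_nnodes; rewrite sz_build // => ->.
  by case/andP: Hi.
move=> i j Hi Hj E.
have Hi' := Hf i Hi; have Hj' := Hf j Hj; rewrite E in Hi'.
apply: val_inj; apply: HL; try exact: ltn_ord.
exact: iso_trans (iso_sym Hi') Hj'.
Qed.

Lemma outer_bound n (L : seq ptree) K :
  (forall i j, (i < size L)%nat -> (j < size L)%nat ->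
     iso (nth (PNode [::]) L i) (nth (PNode [::]) L j) -> i = j) ->
  \sum_(t <- L) \sum_(par : {ffun 'I_n.+1 -> 'I_n.+1} | is_rec par) ((K <= nnodes t) && ~~ avoids t par)
   <= X n.+1 K.
Proof. move=> HL; rewrite exchange_big; apply: leq_sum => par R; exact: inner_bound. Qed.

Lemma Mn_gt0 m : 0 < Mn m.+1.
Proof. elim: m => [|m IH]; by rewrite ?M1 // M_rec muln_gt0. Qed.

Lemma Mn_card n : Mn n = #|[pred par : {ffun 'I_n -> 'I_n} | is_rec par]|.
Proof. by rewrite card_sumb /Mn big_mkcond. Qed.

Lemma split_card n t : #|[pred par : {ffun 'I_n -> 'I_n} | is_rec par && avoids t par]| +
  \sum_(par : {ffun 'I_n -> 'I_n} | is_rec par) ~~ avoids t par = Mn n.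
Proof.
rewrite card_sumb /Mn [RHS]big_mkcond [X in _ + X]big_mkcond -big_split /=; apply: eq_bigr => par _.
by rewrite !inE; case: (is_rec par); case: (avoids t par).
Qed.

Local Open Scope R_scope.

Lemma fold_INR (L : seq ptree) (c : ptree -> nat) (a : R) :
  fold_right Rplus 0 (map (fun t => INR (c t) / a) L) = INR (\sum_(t <- L) c t) / a.
Proof.
elim: L => [|t L IH] /=; first by rewrite big_nil /Rdiv Rmult_0_l.
by rewrite big_cons plus_INR IH /Rdiv Rmult_plus_distr_r.
Qed.

Lemma fold_le (L : seq ptree) (f g : ptree -> R) :
  (forall t, f t <= g t) -> fold_right Rplus 0 (map f L) <= fold_right Rplus 0 (map g L).
Proof. move=> H; elim: L => [|t L IH] /=; [lra|]. by apply: Rplus_le_compat. Qed.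

Lemma fold_ge0 (L : seq ptree) (f : ptree -> R) :
  (forall t, 0 <= f t) -> 0 <= fold_right Rplus 0 (map f L).
Proof. move=> H; elim: L => [|t L IH] /=; [lra|]. by apply: Rplus_le_le_0_compat. Qed.

Lemma div_ge0 a b : 0 <= a -> 0 < b -> 0 <= a / b.
Proof. move=> Ha Hb; apply: Rmult_le_pos => //; left; exact: Rinv_0_lt_compat. Qed.

Lemma exists_nat_ge (D : R) : exists k : nat, D <= INR k.
Proof.
have [H1 _] := archimed D.
case: (Rle_lt_dec D 0) => HD; first by exists 0%nat; rewrite /=.
exists (Z.to_nat (up D)).
rewrite INR_IZR_INZ Znat.Z2Nat.id; first lra.
apply: le_IZR; lra.
Qed.

Lemma main_with (Hlog : forall n, (2 <= n)%nat -> 0 < logs (INR n)) :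
  exists C : R, exists N : nat, forall n : nat, (N <= n)%nat ->
    forall L : seq ptree, rep_system (fun t => (nnodes t <= n)%nat) L ->
      (Rabs (fold_right Rplus 0
         (map (fun t => if Rle_dec (logs (INR n)) (INR (nnodes t))
                        then 1 - coefS t n / coefT n else 0) L))
       <= C * Rabs (INR n / logs (INR n))).
Proof.
exists 1, 2%nat => n Hn L [_ [_ HL]].
case: n Hn HL => [|m] // Hn HL.
have HD := Hlog _ Hn.
set D := logs (INR m.+1) in HD *.
pose P := fun k : nat => if Rle_dec D (INR k) then true else false.
have exP : exists k, P k.
  have [k Hk] := exists_nat_ge D; exists k; rewrite /P; by case: Rle_dec.
case: (ex_minnP exP) => K HK HKmin.
have HK' : D <= INR K by move: HK; rewrite /P; case: Rle_dec.
have HK1 : (1 <= K)%nat.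
  case: K HK HKmin HK' => // _ _ /=; lra.
have HMpos : (0 < Mn m.+1)%nat := Mn_gt0 m.
have HM : 0 < INR (Mn m.+1) by apply: lt_0_INR; apply/ltP.
have Hfact : 0 < INR (m.+1)`! by apply: lt_0_INR; apply/ltP; exact: fact_gt0.
pose c := fun t => \sum_(par : {ffun 'I_m.+1 -> 'I_m.+1} | is_rec par) ((K <= nnodes t) && ~~ avoids t par).
have Hterm : forall t, (if Rle_dec D (INR (nnodes t)) then 1 - coefS t m.+1 / coefT m.+1 else 0)
   = if Rle_dec D (INR (nnodes t)) then INR (c t) / INR (Mn m.+1) else 0.
  move=> t; case: Rle_dec => Ht; last by [].
  have HKt : (K <= nnodes t)%nat by apply: HKmin; rewrite /P; case: Rle_dec.
  change (1 - coefS t m.+1 / coefT m.+1 = INR (c t) / INR (Mn m.+1)).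
  have -> : c t = \sum_(par : {ffun 'I_m.+1 -> 'I_m.+1} | is_rec par) ~~ avoids t par.
    by apply: eq_bigr => par _; rewrite HKt.
  rewrite /coefS /coefT -Mn_card -(split_card m.+1 t).
  have key : forall (a b : nat) (f : R), 0 < f -> 0 < INR (a + b) -> 1 - (INR a / f) / (INR (a + b) / f) = INR b / INR (a + b).
    move=> a b f Hf; rewrite plus_INR => Hab; field; split; lra.
  apply: key => //; by rewrite split_card.
have Hc0 : forall t, 0 <= INR (c t) / INR (Mn m.+1).
  move=> t; apply: div_ge0 => //; exact: pos_INR.
rewrite (eq_map Hterm) Rabs_pos_eq; last first.
  apply: fold_ge0 => t; case: Rle_dec => H0 /=; [exact: Hc0|lra].
apply: Rle_trans (fold_le L (g := fun t => INR (c t) / INR (Mn m.+1)) _) _.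
  move=> t; case: Rle_dec => H0 /=; [lra|exact: Hc0].
rewrite fold_INR Rmult_1_l Rabs_pos_eq; last by apply: div_ge0; [exact: pos_INR|lra].
have Hnat : (K * \sum_(t <- L) c t <= m.+1 * Mn m.+1)%nat.
  apply: leq_trans (X_bound m HK1); rewrite leq_mul2l; apply/orP; right; exact: outer_bound.
have Hreal : INR K * INR (\sum_(t <- L) c t) <= INR m.+1 * INR (Mn m.+1).
  rewrite -!mult_INR; apply: le_INR; exact/leP.
have HKpos : 0 < INR K by lra.
apply: (Rle_trans _ (INR m.+1 / INR K)).
  apply: (Rmult_le_reg_l (INR (Mn m.+1) * INR K)); first nra.
  replace (INR (Mn m.+1) * INR K * (INR (\sum_(t <- L) c t) / INR (Mn m.+1)))
    with (INR K * INR (\sum_(t <- L) c t)) by (field; lra).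
  replace (INR (Mn m.+1) * INR K * (INR m.+1 / INR K)) with (INR m.+1 * INR (Mn m.+1)) by (field; lra).
  exact: Hreal.
rewrite /Rdiv; apply: Rmult_le_compat_l; first exact: pos_INR.
exact: Rinv_le_contravar.
Qed.

Local Open Scope nat_scope.

Fixpoint enc (t : ptree) : seq bool :=
  let: PNode s := t in true :: flatten (map enc s) ++ [:: false].

Definition encf (s : seq ptree) : seq bool := flatten (map enc s) ++ [:: false].

Arguments encf : simpl never.

Lemma encf_cons k ts : encf (PNode k :: ts) = true :: encf k ++ encf ts.
Proof. by rewrite /encf /= -!catA. Qed.

Lemma size_enc t : size (enc t) = (nnodes t).*2.
Proof.
elim/ptree_ind': t => s IH /=.
rewrite size_cat size_flatten /shape -map_comp /= addn1.
have -> : sumn (map (size \o enc) s) = (sumn (map nnodes s)).*2.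
  elim: s IH => [|x s IHs] IH //=; have [Hx Hs] := ForallE IH. by rewrite Hx IHs // doubleD.
by rewrite doubleS.
Qed.

Lemma size_encf s : size (encf s) = (nnodes (PNode s)).*2.-1.
Proof. have := size_enc (PNode s); rewrite /encf /=; set a := size _; set b := sumn _; rewrite -!addnn; lia. Qed.

Fixpoint pf (fuel : nat) (s : seq bool) : option (seq ptree * seq bool) :=
  match fuel with
  | 0 => None
  | f.+1 =>
    match s with
    | false :: r => Some ([::], r)
    | true :: r =>
      match pf f r with
      | Some (kids, r') =>
        match pf f r' with
        | Some (sib, r'') => Some (PNode kids :: sib, r'')
        | None => None
        end
      | None => None
      end
    | [::] => None
    end
  end.

Lemma pf_encf f s r : size (encf s) <= f -> pf f (encf s ++ r) = Some (s, r).
Proof.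
elim: f s r => [|f IH] s r.
  by rewrite size_encf /=; case: (nnodes (PNode s)) => //.
case: s => [|[k] ts] Hs; first by [].
rewrite encf_cons in Hs *. rewrite cat_cons -catA /=.
have Hk : size (encf k) <= f by move: Hs; rewrite /= size_cat; lia.
have Hts : size (encf ts) <= f.
  move: Hs; rewrite /= size_cat size_encf /=; lia.
by rewrite IH // IH.
Qed.

Definition dec (b : seq bool) : option ptree :=
  match b with
  | true :: r => match pf (size b) r with Some (kids, [::]) => Some (PNode kids) | _ => None end
  | _ => None
  end.

Lemma dec_cons b : dec (true :: b) =
  match pf (size b).+1 b with Some (kids, [::]) => Some (PNode kids) | _ => None end.
Proof. by []. Qed.

Lemma decK t : dec (enc t) = Some t.
Proof.
case: t => s.
have E : enc (PNode s) = true :: encf s by [].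
have H := @pf_encf (size (encf s)).+1 s [::]; rewrite cats0 in H.
by rewrite E dec_cons H.
Qed.

Lemma enc_inj t1 t2 : enc t1 = enc t2 -> t1 = t2.
Proof. move=> E; have := decK t1; rewrite E decK; by case. Qed.

Fixpoint allb (m : nat) : seq (seq bool) :=
  if m is m'.+1 then map (cons true) (allb m') ++ map (cons false) (allb m') else [:: [::]].

Lemma size_allb m : size (allb m) = 2 ^ m.
Proof. elim: m => //= m IH; by rewrite size_cat !size_map IH expnS mul2n addnn. Qed.

Lemma mem_allb b : b \in allb (size b).
Proof.
elim: b => [|x b IH] //=; rewrite mem_cat; case: x; apply/orP; [left|right]; by rewrite mem_map // => ? ? [].
Qed.

Lemma In_pmap (l : seq (seq bool)) b t : b \in l -> dec b = Some t -> In t (pmap dec l).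
Proof.
elim: l => [|x l IH] //=; rewrite in_cons => /orP [/eqP <-|H] Hd.
  by rewrite Hd; left.
case: (dec x) => [y|]; [right|]; exact: IH.
Qed.

Lemma In_pmap_inv (l : seq (seq bool)) t : In t (pmap dec l) -> exists b, b \in l /\ dec b = Some t.
Proof.
elim: l => [|x l IH] //=. case E: (dec x) => [y|] /= H.
  case: H => [Ey|H]; first by subst; exists x; rewrite mem_head.
  have [b [Hb Hd]] := IH H; exists b; by rewrite in_cons Hb orbT.
have [b [Hb Hd]] := IH H; exists b; by rewrite in_cons Hb orbT.
Qed.

Lemma In_filter' (p : pred ptree) l t : In t (filter p l) <-> In t l /\ p t.
Proof.
elim: l => [|x l IH] /=; first by split => // [[]].
case E: (p x) => /=; rewrite IH; split.
- case=> [<-|[H1 H2]]; [by split; [left|]|by split; [right|]].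
- case=> [[<-|H1] H2]; [by left|by right].
- case=> H1 H2; by split; [right|].
- case=> [[Ex|H1] H2]; [by subst; rewrite E in H2|by split].
Qed.

Definition cand (k : nat) : seq ptree := filter (fun t => nnodes t == k) (pmap dec (allb k.*2)).

Lemma cand_complete k t : nnodes t = k -> In t (cand k).
Proof.
move=> Ht; rewrite /cand; apply/In_filter'; split; last by rewrite Ht.
apply: (@In_pmap _ (enc t)); last exact: decK.
by rewrite -Ht -size_enc mem_allb.
Qed.

Lemma cand_sound k t : In t (cand k) -> nnodes t = k.
Proof. by rewrite /cand => /In_filter' [_ /eqP]. Qed.

Fixpoint dedup (l : seq ptree) : seq ptree :=
  if l is x :: r then
    let r' := dedup r in if pbool (exists y, In y r' /\ iso x y) then r' else x :: r'
  else [::].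

Lemma dedup_sub l y : In y (dedup l) -> In y l.
Proof.
elim: l => [|x l IH] //=; case: (pbool _) => /=; first by move/IH; right.
case=> [->|/IH]; by [left|right].
Qed.

Lemma dedup_cover l x : In x l -> exists y, In y (dedup l) /\ iso x y.
Proof.
elim: l => [|z l IH] //= [E|Hx]; first subst z.
  rewrite /pbool; case: excluded_middle_informative => [[y [Hy Hxy]]|_] /=; first by exists y.
  exists x; split; [by left|exact: iso_refl].
have [y [Hy Hxy]] := IH Hx; exists y; split => //.
case: (pbool _) => //=; by right.
Qed.

Lemma nth_In' (l : seq ptree) i : i < size l -> In (nth (PNode [::]) l i) l.
Proof. elim: l i => [|x l IH] [|i] //= Hi; [by left|right; exact: IH]. Qed.

Lemma In_nth' (l : seq ptree) t : In t l -> exists i, i < size l /\ nth (PNode [::]) l i = t.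
Proof.
elim: l => [|x l IH] //= [<-|H]; first by exists 0.
have [i [Hi E]] := IH H; by exists i.+1.
Qed.

Lemma dedup_uniq l i j : i < size (dedup l) -> j < size (dedup l) ->
  iso (nth (PNode [::]) (dedup l) i) (nth (PNode [::]) (dedup l) j) -> i = j.
Proof.
elim: l i j => [|x l IH] i j //=.
rewrite /pbool; case: excluded_middle_informative => /= Hx; first exact: IH.
case: i j => [|i] [|j] //= Hi Hj Hiso.
- exfalso; apply: Hx; exists (nth (PNode [::]) (dedup l) j); split => //; exact: nth_In'.
- exfalso; apply: Hx; exists (nth (PNode [::]) (dedup l) i); split; [exact: nth_In'|exact: iso_sym].
- congr S; exact: IH.
Qed.

Lemma rep_exists k : exists L, rep_system (fun t => nnodes t = k) L.
Proof.
exists (dedup (cand k)); split; [|split].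
- move=> t /dedup_sub; exact: cand_sound.
- move=> t /cand_complete /dedup_cover [y [Hy Hty]]; by exists y.
- exact: dedup_uniq.
Qed.

Lemma rep_size_le k L : rep_system (fun t => nnodes t = k) L -> size L <= 2 ^ k.*2.
Proof.
case=> [H1 [_ H3]].
rewrite -(size_map enc) -size_allb; apply: uniq_leq_size.
  apply/(uniqP [::]) => i j; rewrite !inE size_map => Hi Hj.
  rewrite !(nth_map (PNode [::])) // => /enc_inj E.
  apply: H3 => //; rewrite E; exact: iso_refl.
move=> b /(nthP [::]) [i]; rewrite size_map => Hi <-.
rewrite (nth_map (PNode [::])) // -(H1 _ (nth_In' Hi)) -size_enc; exact: mem_allb.
Qed.

Definition gadget (b : bool) : ptree :=
  if b then PNode [:: PNode [:: PNode [::]]] else PNode [:: PNode [::]; PNode [::]].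

Fixpoint spine (bs : seq bool) : ptree :=
  if bs is b :: r then PNode [:: gadget b; spine r] else PNode [::].

Lemma nnodes_spine bs : nnodes (spine bs) = (size bs).*2.*2.+1.
Proof.
elim: bs => //= b bs IH; rewrite IH; case: b => /=; rewrite addn0 -!addnn; lia.
Qed.

Lemma iso_len s1 s2 : iso (PNode s1) (PNode s2) -> size s1 = size s2.
Proof.
move=> /isoE [s2' [P F]]; change (length s1 = length s2).
by rewrite (Forall2_length F) (Permutation_length P).
Qed.

Lemma gadget_inj b b' : iso (gadget b) (gadget b') -> b = b'.
Proof. case: b; case: b' => // /iso_len //. Qed.

Lemma spine_inj bs bs' : size bs = size bs' -> iso (spine bs) (spine bs') -> bs = bs'.
Proof.
elim: bs bs' => [|b bs IH] [|b' bs'] //= [Hs] /isoE [s2' [P F]].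
case: (Permutation_length_2_inv P) => E; subst s2'.
- have [y [c [[<- <-] [H1 F1]]]] := Forall2E F.
  have [y' [c' [[<- <-] [H2 _]]]] := Forall2E F1.
  by rewrite (gadget_inj H1) (IH _ Hs H2).
- have [y [c [[<- <-] [H1 _]]]] := Forall2E F.
  have := iso_nnodes H1; rewrite nnodes_spine; move: H1 => _; case: b {F} => /=; lia.
Qed.

Lemma rep_size_ge m L : rep_system (fun t => nnodes t = (m.*2.*2).+1) L -> 2 ^ m <= size L.
Proof.
case=> [H1 [H2 H3]].
pose f := fun bs : m.-tuple bool =>
  epsilon (inhabits 0) (fun i => i < size L /\ iso (spine bs) (nth (PNode [::]) L i)).
have Hf : forall bs : m.-tuple bool, f bs < size L /\ iso (spine bs) (nth (PNode [::]) L (f bs)).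
  move=> bs; apply: (epsilon_spec (inhabits 0) (fun i => i < size L /\ iso (spine bs) (nth (PNode [::]) L i))).
  have [t' [Ht' Hiso]] := H2 (spine bs) ltac:(by rewrite nnodes_spine size_tuple).
  have [i [Hi E]] := In_nth' Ht'; exists i; by rewrite E.
have finj : injective f.
  move=> bs bs' E; have [_ Hb] := Hf bs; have [_ Hb'] := Hf bs'.
  rewrite E in Hb; apply: val_inj; apply: spine_inj; first by rewrite !size_tuple.
  exact: iso_trans Hb (iso_sym Hb').
have -> : 2 ^ m = size (map f (enum {: m.-tuple bool})).
  by rewrite size_map -cardE card_tuple card_bool.
rewrite -(size_iota 0 (size L)); apply: uniq_leq_size.
  rewrite map_inj_uniq //; exact: enum_uniq.
move=> i /mapP [bs _ ->]; rewrite mem_iota add0n; by case: (Hf bs).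
Qed.

Local Open Scope nat_scope.

Lemma polya_num_spec k : polya_count k (polya_num k).
Proof.
rewrite /polya_num; apply: epsilon_spec.
have [L HL] := rep_exists k; by exists (size L), L.
Qed.

Lemma polya_num_le k : polya_num k <= 2 ^ k.*2.
Proof. have [L [HL <-]] := polya_num_spec k; exact: rep_size_le HL. Qed.

Lemma polya_num_ge m : 2 ^ m <= polya_num (m.*2.*2).+1.
Proof. have [L [HL <-]] := polya_num_spec (m.*2.*2).+1; exact: rep_size_ge HL. Qed.

Local Open Scope R_scope.

Lemma INR_expn a b : INR (a ^ b)%nat = INR a ^ b.
Proof. elim: b => //= b IH; by rewrite expnS mult_INR IH. Qed.

Lemma powr4 r N : r ^ (N.*2.*2) = (r ^ 4) ^ N.
Proof. elim: N => [|N IH]; first by rewrite /=. rewrite !doubleS; change (r ^ (N.*2.*2).+4) with (r * (r * (r * (r * r ^ (N.*2.*2))))); rewrite IH /=; ring. Qed.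

Lemma conv_18 : polya_ogf_converges (1/8).
Proof.
have Hg := GP_infinite (1/2) ltac:(rewrite Rabs_pos_eq; lra).
have Hcmp : forall k, 0 <= INR (polya_num k) * (1/8) ^ k <= 1 * (1/2) ^ k.
  move=> k; split; first by apply: Rmult_le_pos; [exact: pos_INR|apply: pow_le; lra].
  apply: (Rle_trans _ (INR (2 ^ k.*2)%nat * (1/8) ^ k)).
    apply: Rmult_le_compat_r; [apply: pow_le; lra|apply: le_INR; apply/leP; exact: polya_num_le].
  rewrite INR_expn -addnn pow_add -Rpow_mult_distr -Rpow_mult_distr Rmult_1_l.
  apply: pow_incr; simpl INR; lra.
have [l Hl] := Rseries_CV_comp _ _ Hcmp (exist _ _ Hg).
by exists l.
Qed.

Lemma not_conv r : 9/10 < r -> ~ polya_ogf_converges r.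
Proof.
move=> Hr [l Hl].
have [N HN] := Hl (1/4) ltac:(lra).
pose k := (N.*2.*2)%nat.
have H1 := HN k ltac:(rewrite /k -!addnn; apply/leP; rewrite /ge; lia).
have H2 := HN k.+1 ltac:(rewrite /k -!addnn; apply/leP; rewrite /ge; lia).
change (sum_f_R0 (fun k0 : nat => INR (polya_num k0) * r ^ k0) k.+1) with
  (sum_f_R0 (fun k0 : nat => INR (polya_num k0) * r ^ k0) k + INR (polya_num k.+1) * r ^ k.+1) in H2.
rewrite /Rdist in H1 H2.
have [H1a H1b] := Rabs_def2 _ _ H1. have [H2a H2b] := Rabs_def2 _ _ H2.
have Hbig : r <= INR (polya_num k.+1) * r ^ k.+1.
  apply: (Rle_trans _ (INR (2 ^ N)%nat * r ^ k.+1)); last first.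
    apply: Rmult_le_compat_r; [apply: pow_le; lra|apply: le_INR; apply/leP; exact: polya_num_ge].
  rewrite INR_expn /= /k powr4 -Rmult_assoc (Rmult_comm _ r) Rmult_assoc -Rpow_mult_distr.
  rewrite -{1}(Rmult_1_r r); apply: Rmult_le_compat_l; first lra.
  apply: pow_R1_Rle.
  have : (9/10) ^ 4 <= r ^ 4 by apply: pow_incr; lra.
  simpl; lra.
lra.
Qed.

Lemma sigma_bounds : 1/8 <= polya_sigma <= 9/10.
Proof.
pose E := fun r => 0 <= r /\ polya_ogf_converges r.
have Hub : is_upper_bound E (9/10).
  move=> r [Hr Hc]; case: (Rle_lt_dec r (9/10)) => // H; exfalso; exact: not_conv H Hc.
have Hne : E (1/8) by split; [lra|exact: conv_18].
have [s Hs] := completeness E (ex_intro _ _ Hub) (ex_intro _ _ Hne).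
have Hsig : is_lub E polya_sigma.
  rewrite /polya_sigma; apply: (epsilon_spec (inhabits R0) (is_lub E)); by exists s.
case: Hsig => Hsig1 Hsig2; split; [exact: Hsig1|exact: Hsig2].
Qed.

Lemma logs_pos n : (2 <= n)%nat -> 0 < logs (INR n).
Proof.
move=> Hn; have [Hs1 Hs2] := sigma_bounds.
rewrite /logs; apply: Rdiv_lt_0_compat.
  rewrite -ln_1; apply: ln_increasing; first lra.
  have : INR 2 <= INR n by apply: le_INR; apply/leP.
  simpl; lra.
rewrite -ln_1; apply: ln_increasing; first lra.
apply: (Rmult_lt_reg_l polya_sigma); first lra.
rewrite Rmult_1_r /Rdiv Rmult_1_l Rinv_r; lra.
Qed.

Local Open Scope R_scope.

Theorem proposition2p7 :
  exists C : R, exists N : nat, forall n : nat, (N <= n)%nat ->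
    forall L : seq ptree, rep_system (fun t => (nnodes t <= n)%nat) L ->
      (Rabs (fold_right Rplus 0
         (map (fun t => if Rle_dec (logs (INR n)) (INR (nnodes t))
                        then 1 - coefS t n / coefT n else 0) L))
       <= C * Rabs (INR n / logs (INR n))).
Proof.
exact: (main_with logs_pos).
Qed.
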